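(* Let $0\leq\beta<\frac{\sqrt{2}-1}{2\sqrt{2}-1}$. There is a constant $C_\beta$, depending only on $\beta$, such that for all distributions $P\neq Q$, all $\delta\in(0,1)$ and all $n\geq C_\beta\log(1/\delta)/\mathrm{H}^2(P,Q)$ the following holds for every distribution $R$, with $X_1,\dots,X_n$ i.i.d. from $R$. If $R$ satisfies any one of $$\mathrm{H}(P,R)\leq\beta\,\mathrm{H}(P,Q),\quad \mathrm{TV}(P,R)\leq\beta^2\mathrm{H}^2(P,Q),\quad \mathrm{KL}(P,R)\leq 2\beta^2\mathrm{H}^2(P,Q),\quad \mathrm{KL}(R,P)\leq 2\beta^2\mathrm{H}^2(P,Q),$$ then \textsc{HellingerTest} outputs $\mathcal{H}_0$ with probability at least $1-\delta$. Symmetrically, if $R$ satisfies any one of the same four conditions with $P$ replaced by $Q$ (and $\mathrm{H}(P,Q)$ unchanged), then \textsc{HellingerTest} outputs $\mathcal{H}_1$ with probability at least $1-\delta$.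
   Context: Distributions $P,Q,R$ are probability distributions on a measurable space $\mathcal{X}$, identified with their densities with respect to a common $\sigma$-finite reference measure $\mu$. All integrals and norms are taken with respect to $\mu$. The Hellinger distance is $\mathrm{H}(P,Q)=\frac{1}{\sqrt{2}}\|\sqrt{P}-\sqrt{Q}\|_2$. The total variation distance is $\mathrm{TV}(P,Q)=\frac12\|P-Q\|_1$. The KL divergence is $\mathrm{KL}(P,R)=\int P\log\frac{P}{R}\,d\mu$ (natural logarithm). For a sample $X^n=(X_1,\dots,X_n)$, the test statistic is $$\mathrm{T}(P,Q,X^n)=\frac{1}{n}\sum_{i=1}^n \frac{P(X_i)-Q(X_i)}{P(X_i)+Q(X_i)},$$ where a summand is interpreted as $0$ whenever $P(X_i)+Q(X_i)=0$. \textsc{HellingerTest} outputs $\mathcal{H}_0$ if $\mathrm{T}(P,Q,X^n)>0$, outputs $\mathcal{H}_1$ if $\mathrm{T}(P,Q,X^n)<0$, and breaks ties uniformly at random. *)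

(* Defs.v *)
From HB Require Import structures.
From mathcomp Require Import all_boot all_order all_algebra.
From mathcomp Require Import all_classical all_reals all_analysis.
Set Implicit Arguments. Unset Strict Implicit. Unset Printing Implicit Defensive.
Import Order.TTheory GRing.Theory Num.Theory.
Import numFieldNormedType.Exports.
Local Open Scope classical_set_scope.
Local Open Scope ring_scope.

Section defs.
Context {R : realType} {d : measure_display} {T : measurableType d}.
Variable mu : {measure set T -> \bar R}.

Definition is_density (p : T -> R) : Prop :=
  [/\ measurable_fun setT p, (forall x, 0 <= p x) &
      (\int[mu]_x (p x)%:E = 1)%E].

Definition distr_neq (p q : T -> R) : Prop :=
  exists A, measurable A /\
    (\int[mu]_(x in A) (p x)%:E <> \int[mu]_(x in A) (q x)%:E)%E.

Definition hellinger (p q : T -> R) : R :=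
  (Num.sqrt 2)^-1 *
  Num.sqrt (fine (\int[mu]_x ((Num.sqrt (p x) - Num.sqrt (q x)) ^+ 2)%:E)).

Definition tv (p q : T -> R) : R :=
  2^-1 * fine (\int[mu]_x (`|p x - q x|)%:E).

Definition kl_integrand (p r : T -> R) (x : T) : \bar R :=
  if p x == 0 then 0%E
  else if r x == 0 then +oo%E
  else (p x * ln (p x / r x))%:E.

Definition kl (p r : T -> R) : \bar R := (\int[mu]_x kl_integrand p r x)%E.

(* Expectation of g(X_1,...,X_n) for X_i i.i.d. with density r
   (iterated integral over the product measure; g nonnegative) *)
Fixpoint iid_expect (r : T -> R) (n : nat) (g : seq T -> \bar R) : \bar R :=
  match n with
  | 0 => g [::]
  | n'.+1 => (\int[mu]_x ((r x)%:E * iid_expect r n' (fun s => g (x :: s))))%E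
  end.
End defs.

Section test.
Context {R : realType} {T : Type}.

Definition test_summand (p q : T -> R) (x : T) : R :=
  if p x + q x == 0 then 0 else (p x - q x) / (p x + q x).

Definition test_stat (p q : T -> R) (xs : seq T) : R :=
  (size xs)%:R^-1 * \sum_(x <- xs) test_summand p q x.

(* probability (over the uniform tie-breaking coin) that HellingerTest
   outputs H0, resp. H1, on the sample xs *)
Definition out_H0 (p q : T -> R) (xs : seq T) : R :=
  if 0 < test_stat p q xs then 1
  else if test_stat p q xs == 0 then 2^-1 else 0.

Definition out_H1 (p q : T -> R) (xs : seq T) : R :=
  if test_stat p q xs < 0 then 1
  else if test_stat p q xs == 0 then 2^-1 else 0.
End test.

Definition close_to {R : realType} {d} {T : measurableType d}
  (mu : {measure set T -> \bar R}) (beta h : R) (p r : T -> R) : Prop :=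
  [\/ hellinger mu p r <= beta * h,
      tv mu p r <= beta ^+ 2 * h ^+ 2,
      (kl mu p r <= (2 * beta ^+ 2 * h ^+ 2)%:E)%E |
      (kl mu r p <= (2 * beta ^+ 2 * h ^+ 2)%:E)%E].

(* Main.v *)
Require Import Defs.
From HB Require Import structures.
From mathcomp Require Import all_boot all_order all_algebra.
From mathcomp Require Import all_classical all_reals all_analysis.
From mathcomp Require Import ring lra.
Import measurable_realfun.
Import Order.TTheory GRing.Theory Num.Theory.
Import numFieldNormedType.Exports.
Local Open Scope classical_set_scope.
Local Open Scope ring_scope.

Section alg.
Variable R : realFieldType.
Implicit Types a b c : R.

Lemma gdef_abs a b : `|(a^+2 - b^+2) / (a^+2 + b^+2)| <= 1.
Proof.
have [s0|sp] := eqVneq (a^+2 + b^+2) 0.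
  by rewrite s0 invr0 mulr0 normr0.
have sp' : 0 < a^+2 + b^+2 by rewrite lt_neqAle eq_sym sp /= addr_ge0 // sqr_ge0.
rewrite normrM normfV (gtr0_norm sp') ler_pdivrMr // mul1r.
rewrite ler_norml; apply/andP; split; nra.
Qed.

Lemma alg_sq a b : 0 <= a -> 0 <= b ->
  (a - b)^+2 * (a^+2 + b^+2) <= (a^+2 - b^+2)^+2.
Proof.
move=> ha hb.
have -> : (a^+2 - b^+2)^+2 = (a-b)^+2 * (a+b)^+2 by ring.
apply: ler_wpM2l; first exact: sqr_ge0.
nra.
Qed.

Lemma P1 a b c : 0 <= a -> 0 <= b -> 0 <= c ->
  c^+2 * ((a^+2 - b^+2) / (a^+2 + b^+2)) >=
  (a-b)^+2/8 - 2*(c-a)^+2 + (a^+2-b^+2)/2.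
Proof.
move=> ha hb hc.
set s := a^+2 + b^+2.
have [s0|sp] := eqVneq s 0.
  have s0' : a^+2+b^+2 = 0 by [].
  have a0 : a = 0 by nra.
  have b0 : b = 0 by nra.
  rewrite s0 invr0 mulr0 mulr0 a0 b0; nra.
have sp' : 0 < s by rewrite lt_neqAle eq_sym sp /= addr_ge0 // sqr_ge0.
set g := (a^+2 - b^+2) / s.
have hg : g * s = a^+2 - b^+2 by rewrite /g divfK.
have g1 := gdef_abs a b; rewrite -/s -/g in g1.
move: g1; rewrite ler_norml => /andP[g1 g2].
have id1 : (g+2)*(c^+2*g + 2*(c-a)^+2) - 2*a^+2*g = ((g+2)*c - 2*a)^+2 by ring.
have h1 : (g+2)*(c^+2*g + 2*(c-a)^+2) >= 2*a^+2*g.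
  by rewrite -subr_ge0 id1 sqr_ge0.
have h2 : (a-b)^+2 * s <= g^+2 * s^+2.
  by have := alg_sq a b ha hb; rewrite -/s -hg exprMn.
have h3 : (a-b)^+2 <= g^+2 * s.
  rewrite -(ler_pM2r sp'); nra.
have ha2 : 2 * a^+2 = s + g * s by rewrite hg /s; ring.
nra.
Qed.

Lemma P2 a b c : 0 <= a -> 0 <= b -> 0 <= c ->
  c^+2 * ((a^+2 - b^+2) / (a^+2 + b^+2))^+2 <= 2*(c-a)^+2 + 4*(a-b)^+2.
Proof.
move=> ha hb hc.
set s := a^+2 + b^+2.
have [s0|sp] := eqVneq s 0.
  have h0 : (a^+2 - b^+2)/s = 0 by rewrite s0 invr0 mulr0.
  rewrite h0 (expr2 0) !mulr0; apply: addr_ge0; apply: mulr_ge0 => //; exact: sqr_ge0.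
have sp' : 0 < s by rewrite lt_neqAle eq_sym sp /= addr_ge0 // sqr_ge0.
set g := (a^+2 - b^+2) / s.
have hg : g * s = a^+2 - b^+2 by rewrite /g divfK.
have g1 := gdef_abs a b; rewrite -/s -/g in g1.
have g2 : g^+2 <= 1.
  by move: g1; rewrite ler_norml => /andP[? ?]; nra.
have h1 : a^+2 * g^+2 * s^+2 <= 2*(a-b)^+2 * s^+2.
  have -> : a^+2 * g^+2 * s^+2 = a^+2 * (a-b)^+2*(a+b)^+2.
    by rewrite -[_ * s^+2]mulrA -exprMn hg; ring.
  have H : a^+2 * (a+b)^+2 <= 2 * s^+2 by rewrite /s; nra.
  have E1 : a^+2 * (a-b)^+2*(a+b)^+2 = (a-b)^+2 * (a^+2 * (a+b)^+2) by ring.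
  have E2 : 2*(a-b)^+2*s^+2 = (a-b)^+2 * (2*s^+2) by ring.
  by rewrite E1 E2 ler_wpM2l // sqr_ge0.
have h2 : a^+2 * g^+2 <= 2*(a-b)^+2.
  by rewrite -(ler_pM2r (exprn_gt0 2 sp')).
have H3 : c^+2 <= 2*(c-a)^+2 + 2*a^+2.
  have : 0 <= (c - 2*a)^+2 by exact: sqr_ge0.
  have -> : 2*(c-a)^+2 + 2*a^+2 = c^+2 + (c - 2*a)^+2 by ring.
  by rewrite lerDl.
have H4 : c^+2 * g^+2 <= (2*(c-a)^+2 + 2*a^+2) * g^+2 by rewrite ler_wpM2r // sqr_ge0.
have H5 : (c-a)^+2 * g^+2 <= (c-a)^+2 by rewrite ler_piMr // sqr_ge0.
clearbody s g. nra.
Qed.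
End alg.

Section gen.
Context {R : realType} {d : measure_display} {T : measurableType d}.
Variable mu : {measure set T -> \bar R}.

Lemma le_nnint (f g : T -> \bar R) : (forall x, (0 <= f x)%E) ->
  (forall x, (f x <= g x)%E) -> (\int[mu]_x f x <= \int[mu]_x g x)%E.
Proof.
move=> f0 fg; have g0 : forall x, (0 <= g x)%E by move=> x; exact: le_trans (f0 x) (fg x).
rewrite !ge0_integralTE //.
apply: ge_ereal_sup => _ [h hf <-]; apply: ereal_sup_ubound; exists h => //.
by move=> x; exact: le_trans (hf x) (fg x).
Qed.

Lemma le_int (f g : T -> \bar R) :
  (forall x, (f x <= g x)%E) -> (\int[mu]_x f x <= \int[mu]_x g x)%E.
Proof.
move=> fg; rewrite (integralE _ _ f) (integralE _ _ g); apply: leeB.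
  apply: le_nnint => x; first exact: funepos_ge0.
  by apply: (@funepos_le _ _ setT); rewrite ?inE // => y _; exact: fg.
apply: le_nnint => x; first exact: funeneg_ge0.
by apply: (@funeneg_le _ _ setT); rewrite ?inE // => y _; exact: fg.
Qed.
End gen.

Section dens.
Context {R : realType} {d : measure_display} {T : measurableType d}.
Variable mu : {measure set T -> \bar R}.

Lemma dens_meas p : is_density mu p -> measurable_fun setT p.
Proof. by case. Qed.
Lemma dens_ge0 p : is_density mu p -> forall x, 0 <= p x.
Proof. by case. Qed.

Lemma dens_int p : is_density mu p -> mu.-integrable setT (EFin \o p).
Proof.
case=> mp p0 p1; apply/integrableP; split; first exact/measurable_EFinP.
under eq_integral do rewrite /= ger0_norm ?p0 //.
by rewrite p1 ltry.
Qed.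

Lemma dens_Rint p : is_density mu p -> \int[mu]_x p x = 1.
Proof. by case=> _ _ p1; rewrite /Rintegral p1. Qed.

Lemma int_EFin (g : T -> R) : mu.-integrable setT (EFin \o g) ->
  (\int[mu]_x (g x)%:E = (\int[mu]_x g x)%:E)%E.
Proof. by move=> ig; rewrite /Rintegral fineK // integrable_fin_num. Qed.

Lemma int_dom (g h : T -> R) : measurable_fun setT g ->
  mu.-integrable setT (EFin \o h) -> (forall x, `|g x| <= h x) ->
  mu.-integrable setT (EFin \o g).
Proof.
move=> mg ih gh; apply: le_integrable ih => //.
  exact/measurable_EFinP.
move=> x _ /=; rewrite lee_fin (le_trans (gh x)) //.
exact: ler_norm.
Qed.

Lemma meas_sqrt (p : T -> R) : measurable_fun setT p ->
  measurable_fun setT (fun x => Num.sqrt (p x)).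
Proof.
move=> mp; apply: (measurableT_comp (f := @Num.sqrt R)) => //.
apply: continuous_measurable_fun; exact: sqrt_continuous.
Qed.

Lemma meas_inv (p : T -> R) : measurable_fun setT p -> (forall x, 0 <= p x) ->
  measurable_fun setT (fun x => (p x)^-1).
Proof.
move=> mp p0.
have -> : (fun x => (p x)^-1) = (fun x => powR (p x) (-1)).
  by apply: funext => x; rewrite powR_inv1.
exact: measurableT_comp (measurable_powR _) mp.
Qed.

End dens.
Arguments dens_meas {R d T mu p}.
Arguments dens_ge0 {R d T mu p}.
Arguments dens_int {R d T mu p}.
Arguments dens_Rint {R d T mu p}.
Arguments int_dom {R d T mu g h}.
Arguments int_EFin {R d T mu g}.

Section hell.
Context {R : realType} {d : measure_display} {T : measurableType d}.
Variable mu : {measure set T -> \bar R}.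

Definition II (u v : T -> R) : R :=
  \int[mu]_x (Num.sqrt (u x) - Num.sqrt (v x))^+2.

Lemma int_add (g h : T -> R) : mu.-integrable setT (EFin \o g) ->
  mu.-integrable setT (EFin \o h) -> mu.-integrable setT (EFin \o (fun x => g x + h x)).
Proof.
move=> ig ih; apply: eq_integrable (integrableD _ ig ih) => // x _ /=.
Qed.

Lemma int_scale (k : R) (g : T -> R) : mu.-integrable setT (EFin \o g) ->
  mu.-integrable setT (EFin \o (fun x => k * g x)).
Proof.
move=> ig; apply: eq_integrable (integrableZl _ k ig) => // x _ /=.
Qed.

Lemma II_ge0 u v : 0 <= II u v.
Proof. by apply: Rintegral_ge0 => x _; exact: sqr_ge0. Qed.

Lemma II_sym u v : II u v = II v u.
Proof.
by rewrite /II; apply: eq_Rintegral => x _; rewrite -sqrrN opprB.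
Qed.

Lemma hell_II u v : hellinger mu u v = (Num.sqrt 2)^-1 * Num.sqrt (II u v).
Proof. by []. Qed.

Lemma hell_sq u v : hellinger mu u v ^+ 2 = II u v / 2.
Proof.
rewrite hell_II exprMn exprVn !sqr_sqrtr //; last exact: II_ge0.
by rewrite mulrC.
Qed.

Lemma hell_ge0 u v : 0 <= hellinger mu u v.
Proof. by rewrite hell_II mulr_ge0 // invr_ge0 sqrtr_ge0. Qed.

Lemma hell_sym u v : hellinger mu u v = hellinger mu v u.
Proof. by rewrite !hell_II II_sym. Qed.

Lemma int_sqdiff u v : is_density mu u -> is_density mu v ->
  mu.-integrable setT (EFin \o (fun x => (Num.sqrt (u x) - Num.sqrt (v x))^+2)).
Proof.
move=> du dv.
apply: (@int_dom _ _ _ mu _ (fun x => 2 * (u x + v x))).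
- by apply: measurable_funX; apply: measurable_funB; apply: meas_sqrt; apply: dens_meas; eassumption.
- by apply: int_scale; apply: int_add; exact: dens_int.
- move=> x; rewrite ger0_norm ?sqr_ge0 //.
  have u0 := dens_ge0 du x; have v0 := dens_ge0 dv x.
  have hu := sqr_sqrtr u0; have hv := sqr_sqrtr v0.
  have su := sqrtr_ge0 (u x); have sv := sqrtr_ge0 (v x).
  nra.
Qed.

End hell.
Arguments int_sqdiff {R d T mu u v}.
Arguments int_add {R d T mu g h}.
Arguments int_scale {R d T mu} k {g}.

Section klpt.
Context {R : realType}.

Lemma kl_pt (u v : R) : 0 <= u -> 0 <= v ->
  (((Num.sqrt u - Num.sqrt v)^+2 + u - v)%:E <=
   (if u == 0%R then 0 else if v == 0%R then +oo else (u * ln (u / v))%:E))%E.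
Proof.
move=> u0 v0.
have [->|un0] := eqVneq u 0.
  by rewrite sqrtr0 sub0r sqrrN sqr_sqrtr // addr0 subrr.
have [->|vn0] := eqVneq v 0; first exact: leey.
rewrite lee_fin.
have up : 0 < u by rewrite lt_neqAle eq_sym un0.
have vp : 0 < v by rewrite lt_neqAle eq_sym vn0.
set a := Num.sqrt u; set c := Num.sqrt v.
have ap : 0 < a by rewrite sqrtr_gt0.
have cp : 0 < c by rewrite sqrtr_gt0.
have ua : u = a^+2 by rewrite sqr_sqrtr // ltW.
have vc : v = c^+2 by rewrite sqr_sqrtr // ltW.
set y := c / a.
have yp : 0 < y by rewrite divr_gt0.
have lny : ln y <= y - 1.
  have h := @le_ln1Dx R (y - 1).
  have e : 1 + (y - 1) = y by ring.
  rewrite e in h; apply: h; lra.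
have e1 : v / u = y^+2 by rewrite vc ua expr_div_n.
have e2 : u / v = (y^+2)^-1 by rewrite -e1 invf_div.
have e3 : ln (u / v) = - (ln y *+ 2).
  by rewrite e2 lnV ?posrE ?exprn_gt0 // lnXn.
have e4 : u * y = a * c.
  rewrite ua /y; field; by rewrite gt_eqF.
rewrite e3.
have -> : (a - c)^+2 + u - v = 2 * u - 2 * (u * y) by rewrite e4 ua vc; ring.
have H : u * (ln y *+ 2) <= u * ((y - 1) *+ 2) by rewrite ler_pM2l // lerMn2r.
have e5 : u * ((y - 1) *+ 2) = 2*(u*y) - 2*u by rewrite -mulr_natr; ring.
rewrite e5 in H; rewrite mulrN; clearbody a c y; lra.
Qed.

End klpt.

Section reduce.
Context {R : realType} {d : measure_display} {T : measurableType d}.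
Variable mu : {measure set T -> \bar R}.

Lemma int_sub (g h : T -> R) : mu.-integrable setT (EFin \o g) ->
  mu.-integrable setT (EFin \o h) -> mu.-integrable setT (EFin \o (fun x => g x - h x)).
Proof.
move=> ig ih; apply: eq_integrable (integrableB _ ig ih) => // x _ /=.
Qed.
Arguments int_sub {g h}.

Lemma kl_II u v : is_density mu u -> is_density mu v ->
  ((II mu u v)%:E <= kl mu u v)%E.
Proof.
move=> du dv.
have iA := int_sqdiff du dv.
have iu := dens_int du; have iv := dens_int dv.
have iAu := int_add iA iu.
have iAuv := int_sub iAu iv.
have -> : II mu u v = \int[mu]_x ((Num.sqrt (u x) - Num.sqrt (v x))^+2 + u x - v x).
  rewrite RintegralB // RintegralD // (dens_Rint du) (dens_Rint dv).
  by rewrite /II addrK.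
rewrite -int_EFin //; apply: le_int => x.
rewrite /kl_integrand; exact: kl_pt (dens_ge0 du x) (dens_ge0 dv x).
Qed.

Lemma tv_II u v : is_density mu u -> is_density mu v ->
  II mu u v / 2 <= tv mu u v.
Proof.
move=> du dv.
have iA := int_sqdiff du dv.
have iu := dens_int du; have iv := dens_int dv.
have mB : measurable_fun setT (fun x => `|u x - v x|).
  apply: (measurableT_comp (f := @Num.norm R R)) => //.
  by apply: measurable_funB; [exact: (dens_meas du)|exact: (dens_meas dv)].
have iB : mu.-integrable setT (EFin \o (fun x => `|u x - v x|)).
  apply: (int_dom mB (int_add iu iv)) => x.
  rewrite normr_id; have := dens_ge0 du x; have := dens_ge0 dv x.
  move=> h1 h2; rewrite ler_norml; apply/andP; split; lra.
rewrite /tv mulrC ler_pM2l ?invr_gt0 //.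
have -> : fine (\int[mu]_x (`|u x - v x|)%:E)%E = \int[mu]_x `|u x - v x| by [].
apply: le_Rintegral => // x _.
have u0 := dens_ge0 du x; have v0 := dens_ge0 dv x.
have hu := sqr_sqrtr u0; have hv := sqr_sqrtr v0.
have su := sqrtr_ge0 (u x); have sv := sqrtr_ge0 (v x).
move: su sv hu hv; set a := Num.sqrt (u x); set c := Num.sqrt (v x) => su sv hu hv.
rewrite -hu -hv.
have -> : a^+2 - c^+2 = (a - c) * (a + c) by ring.
rewrite normrM (ger0_norm (addr_ge0 su sv)).
have -> : (a - c)^+2 = `|a - c| * `|a - c| by rewrite -normrM -expr2 ger0_norm // sqr_ge0.
apply: ler_wpM2l => //.
rewrite ler_norml; apply/andP; split; clearbody a c; lra.
Qed.

Lemma close_II (beta h : R) p r : 0 <= beta -> 0 <= h ->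
  is_density mu p -> is_density mu r -> close_to mu beta h p r ->
  II mu p r <= 2 * beta^+2 * h^+2.
Proof.
move=> b0 h0 dp dr [H|H|H|H].
- have hge := hell_ge0 mu p r.
  have : hellinger mu p r ^+ 2 <= (beta * h)^+2.
    by rewrite ler_sqr // ?nnegrE // mulr_ge0.
  rewrite hell_sq exprMn; lra.
- have := tv_II _ _ dp dr; lra.
- have := kl_II _ _ dp dr; move=> H2; have := le_trans H2 H; rewrite lee_fin.
  lra.
- have := kl_II _ _ dr dp; rewrite II_sym => H2; have := le_trans H2 H; rewrite lee_fin.
  lra.
Qed.

End reduce.
Arguments int_sub {R d T mu g h}.

Section core.
Context {R : realType} {d : measure_display} {T : measurableType d}.
Variable mu : {measure set T -> \bar R}.

Lemma ts_eq (p q : T -> R) x :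
  test_summand p q x = (p x - q x) / (p x + q x).
Proof.
rewrite /test_summand; case: ifP => // /eqP ->; by rewrite invr0 mulr0.
Qed.

Lemma ts_sq (p q : T -> R) x : 0 <= p x -> 0 <= q x ->
  test_summand p q x = (Num.sqrt (p x) ^+ 2 - Num.sqrt (q x) ^+2) /
                       (Num.sqrt (p x) ^+ 2 + Num.sqrt (q x) ^+2).
Proof. by move=> p0 q0; rewrite ts_eq !sqr_sqrtr. Qed.

Lemma ts_abs (p q : T -> R) x : 0 <= p x -> 0 <= q x ->
  `|test_summand p q x| <= 1.
Proof. by move=> p0 q0; rewrite ts_sq //; exact: gdef_abs. Qed.

Lemma ts_meas (p q : T -> R) : is_density mu p -> is_density mu q ->
  measurable_fun setT (test_summand p q).
Proof.
move=> dp dq.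
have -> : test_summand p q = (fun x => (p x - q x) * (p x + q x)^-1).
  by apply: funext => x; rewrite ts_eq.
apply: measurable_funM.
  by apply: measurable_funB; [exact: (dens_meas dp)|exact: (dens_meas dq)].
apply: meas_inv.
  by apply: measurable_funD; [exact: (dens_meas dp)|exact: (dens_meas dq)].
by move=> x; rewrite addr_ge0 //; [exact: (dens_ge0 dp)|exact: (dens_ge0 dq)].
Qed.

Lemma int_rg (p q r : T -> R) (g : R -> R) : is_density mu p -> is_density mu q ->
  is_density mu r -> measurable_fun setT g -> (forall y, -1 <= y <= 1 -> `|g y| <= 1) ->
  mu.-integrable setT (EFin \o (fun x => r x * g (test_summand p q x))).
Proof.
move=> dp dq dr mg gb.
apply: (int_dom _ (dens_int dr)).
  apply: measurable_funM; first exact: (dens_meas dr).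
  by apply: (measurableT_comp (f := g)) => //; exact: ts_meas.
move=> x; rewrite normrM ger0_norm; last exact: (dens_ge0 dr).
rewrite ler_piMr //; first exact: (dens_ge0 dr).
apply: gb; rewrite -ler_norml; apply: ts_abs; [exact: (dens_ge0 dp)|exact: (dens_ge0 dq)].
Qed.


Lemma m_bound p q r : is_density mu p -> is_density mu q -> is_density mu r ->
  II mu p q / 8 - 2 * II mu p r <= \int[mu]_x (r x * test_summand p q x).
Proof.
move=> dp dq dr.
have iA := int_sqdiff dp dq.
have iB := int_sqdiff dr dp.
have ip := dens_int dp; have iq := dens_int dq.
have i1 := int_scale 8^-1 iA.
have i2 := int_scale 2 iB.
have i12 := int_sub i1 i2.
have i3 := int_scale 2^-1 (int_sub ip iq).
have e : II mu p q / 8 - 2 * II mu p r =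
  \int[mu]_x (8^-1 * (Num.sqrt (p x) - Num.sqrt (q x))^+2
               - 2 * (Num.sqrt (r x) - Num.sqrt (p x))^+2
               + 2^-1 * (p x - q x)).
  rewrite RintegralD // RintegralB // !RintegralZl //; last exact: int_sub.
  rewrite RintegralB // (dens_Rint dp) (dens_Rint dq) subrr mulr0 addr0.
  by rewrite (II_sym mu p r) mulrC.
rewrite e; apply: le_Rintegral => //.
  exact: int_add i12 i3.
  apply: (@int_rg p q r id dp dq dr) => // y; by rewrite ler_norml.
move=> x _.
have p0 := dens_ge0 dp x; have q0 := dens_ge0 dq x; have r0 := dens_ge0 dr x.
rewrite ts_eq.
have := @P1 R _ _ _ (sqrtr_ge0 (p x)) (sqrtr_ge0 (q x)) (sqrtr_ge0 (r x)).
rewrite !sqr_sqrtr //.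
move: ((p x - q x) / (p x + q x)) => F.
move: (Num.sqrt (p x)) (Num.sqrt (q x)) (Num.sqrt (r x)) => a b c.
lra.
Qed.

Lemma v_bound p q r : is_density mu p -> is_density mu q -> is_density mu r ->
  \int[mu]_x (r x * (test_summand p q x)^+2) <= 2 * II mu p r + 4 * II mu p q.
Proof.
move=> dp dq dr.
have iA := int_sqdiff dp dq.
have iB := int_sqdiff dr dp.
have i1 := int_scale 2 iB.
have i2 := int_scale 4 iA.
have e : 2 * II mu p r + 4 * II mu p q =
  \int[mu]_x (2 * (Num.sqrt (r x) - Num.sqrt (p x))^+2
               + 4 * (Num.sqrt (p x) - Num.sqrt (q x))^+2).
  by rewrite RintegralD // !RintegralZl // (II_sym mu p r).
rewrite e; apply: le_Rintegral => //.
  apply: (@int_rg p q r (fun y => y^+2) dp dq dr).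
    exact: measurable_funX.
  move=> y /andP[y1 y2]; rewrite ger0_norm ?sqr_ge0 //; nra.
  exact: int_add i1 i2.
move=> x _.
have p0 := dens_ge0 dp x; have q0 := dens_ge0 dq x; have r0 := dens_ge0 dr x.
rewrite ts_eq.
have := @P2 R _ _ _ (sqrtr_ge0 (p x)) (sqrtr_ge0 (q x)) (sqrtr_ge0 (r x)).
rewrite !sqr_sqrtr //.
Qed.

End core.

Section chern.
Context {R : realType} {d : measure_display} {T : measurableType d}.
Variable mu : {measure set T -> \bar R}.

Definition Phi0 (t : R) : R := if 0 < t then 1 else if t == 0 then 2^-1 else 0.
Definition Ssum (f : T -> R) (xs : seq T) : R := \sum_(x <- xs) f x.

Lemma Phi0_ge0 t : 0 <= Phi0 t.
Proof. by rewrite /Phi0; case: ifP => // _; case: ifP. Qed.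

Lemma out_H0_eq (p q : T -> R) xs : out_H0 p q xs = Phi0 (Ssum (test_summand p q) xs).
Proof.
rewrite /out_H0 /test_stat /Phi0 /Ssum.
case: xs => [|x s].
  by rewrite big_nil mulr0.
set S := \sum_(_ <- _) _.
have kp : 0 < (size (x :: s))%:R^-1 :> R by rewrite invr_gt0 ltr0n.
by rewrite pmulr_rgt0 // mulf_eq0 (gt_eqF kp).
Qed.

Lemma ts_swap (p q : T -> R) x : test_summand q p x = - test_summand p q x.
Proof. by rewrite !ts_eq -mulNr opprB (addrC (p x) (q x)). Qed.

Lemma out_H1_eq (p q : T -> R) xs : out_H1 p q xs = out_H0 q p xs.
Proof.
have e : test_stat q p xs = - test_stat p q xs.
  rewrite /test_stat -mulrN -sumrN; congr (_ * _).
  by apply: eq_bigr => x _; rewrite ts_swap.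
by rewrite /out_H1 /out_H0 e oppr_gt0 oppr_eq0.
Qed.

Lemma iid_ge0 (r : T -> R) n (g : seq T -> \bar R) : (forall x, 0 <= r x) ->
  (forall xs, (0 <= g xs)%E) -> (0 <= iid_expect mu r n g)%E.
Proof.
move=> r0; elim: n g => [|n IH] g g0 //=.
apply: integral_ge0 => x _; apply: mule_ge0; first by rewrite lee_fin.
by apply: IH => xs; exact: g0.
Qed.

Definition hh (r f : T -> R) n t :=
  iid_expect mu r n (fun xs => (Phi0 (t + Ssum f xs))%:E).

Lemma hh_step r f n t : hh r f n.+1 t =
  (\int[mu]_x ((r x)%:E * hh r f n (t + f x)))%E.
Proof.
rewrite /hh /=; apply: eq_integral => x _; congr (_ * _)%E.
congr (iid_expect _ _ _ _); apply: funext => s.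
by rewrite /Ssum big_cons addrA.
Qed.

Lemma hh_ge0 r f n t : (forall x, 0 <= r x) -> (0 <= hh r f n t)%E.
Proof. by move=> r0; apply: iid_ge0 => // xs; rewrite lee_fin Phi0_ge0. Qed.

Lemma int_rgK (p q r : T -> R) (g : R -> R) (K : R) : is_density mu p -> is_density mu q ->
  is_density mu r -> measurable_fun setT g -> (forall y, -1 <= y <= 1 -> `|g y| <= K) ->
  mu.-integrable setT (EFin \o (fun x => r x * g (test_summand p q x))).
Proof.
move=> dp dq dr mg gb.
apply: (int_dom _ (int_scale K (dens_int dr))).
  apply: measurable_funM; first exact: (dens_meas dr).
  by apply: (measurableT_comp (f := g)) => //; exact: (ts_meas _ _ _ dp dq).
move=> x; rewrite normrM ger0_norm; last exact: (dens_ge0 dr).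
rewrite mulrC ler_wpM2r //; first exact: (dens_ge0 dr).
apply: gb; rewrite -ler_norml; apply: ts_abs; [exact: (dens_ge0 dp)|exact: (dens_ge0 dq)].
Qed.

Lemma int_re (p q r : T -> R) (lam : R) : is_density mu p -> is_density mu q ->
  is_density mu r -> 0 <= lam ->
  mu.-integrable setT (EFin \o (fun x => r x * expR (- (lam * test_summand p q x)))).
Proof.
move=> dp dq dr l0.
apply: (@int_rgK p q r (fun y => expR (- (lam * y))) (expR lam)) => //.
  apply: (measurableT_comp (f := expR)) => //.
  by apply: measurable_funN; apply: measurable_funM.
move=> y /andP[y1 y2]; rewrite ger0_norm ?expR_ge0 // ler_expR; nra.
Qed.

Lemma chern p q r lam n t : is_density mu p -> is_density mu q ->
  is_density mu r -> 0 <= lam ->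
  ((1 - expR (- (lam * t)) *
     (\int[mu]_x (r x * expR (- (lam * test_summand p q x))))^+n)%:E
   <= hh r (test_summand p q) n t)%E.
Proof.
move=> dp dq dr l0.
set f := test_summand p q.
set M := \int[mu]_x (r x * expR (- (lam * f x))).
have r0 := dens_ge0 dr.
elim: n t => [|n IH] t.
  rewrite /hh /= /Ssum big_nil addr0 expr0 mulr1 lee_fin /Phi0.
  case: ifP => t0; first by have := expR_ge0 (- (lam * t)); lra.
  have e1 : 1 <= expR (- (lam * t)).
    apply: le_trans (expR_ge1Dx _); rewrite lerDl oppr_ge0.
    by rewrite mulr_ge0_le0 // leNgt t0.
  apply: (@le_trans _ _ 0); first lra.
  by case: ifP.
rewrite hh_step.
set k := expR (- (lam * t)) * M ^+ n.
have ie := @int_re p q r lam dp dq dr l0.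
have eq1 : 1 - expR (- (lam * t)) * M ^+ n.+1 =
    \int[mu]_x (r x - k * (r x * expR (- (lam * f x)))).
  have ir := dens_int dr; have ike := int_scale k ie.
  rewrite RintegralB //.
  by rewrite RintegralZl // (dens_Rint dr) /k exprSr mulrA.
rewrite eq1 -int_EFin; last exact: int_sub (dens_int dr) (int_scale k ie).
apply: (@le_trans _ _ (\int[mu]_x ((r x * Order.max 0
   (1 - expR (- (lam * (t + f x))) * M ^+ n))%:E))%E).
  apply: le_int => x; rewrite lee_fin.
  have -> : r x - k * (r x * expR (- (lam * f x))) =
      r x * (1 - expR (- (lam * (t + f x))) * M ^+ n).
    by rewrite (mulrDr lam) opprD expRD /k; ring.
  by rewrite ler_wpM2l // le_max lexx orbT.
apply: le_nnint => x.
  by rewrite lee_fin mulr_ge0 // le_max lexx.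
rewrite EFinM; apply: lee_wpmul2l; first by rewrite lee_fin.
have [h0|h0] := leP (1 - expR (- (lam * (t + f x))) * M ^+ n) 0.
  exact: hh_ge0.
exact: IH.
Qed.

End chern.

Section expq.
Context {R : realType}.
Lemma exp_quad (x : R) : x <= 2^-1 -> expR x <= 1 + x + 2 * x^+2.
Proof.
move=> x2.
have h1 : 1 - x <= expR (- x) by have := expR_ge1Dx (- x).
have h1p : 0 < 1 - x by lra.
have e : expR x = (expR (- x))^-1 by rewrite expRN invrK.
rewrite e.
apply: (@le_trans _ _ (1 - x)^-1).
  by rewrite lef_pV2 ?posrE ?expR_gt0.
rewrite -[X in X <= _]div1r ler_pdivrMr //.
have h : 0 <= x^+2 * (1 - 2 * x) by rewrite mulr_ge0 ?sqr_ge0 //; lra.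
have -> : (1 + x + 2 * x^+2) * (1 - x) = 1 + x^+2 * (1 - 2 * x) by ring.
by rewrite lerDl.
Qed.
End expq.

Section mainH0.
Context {R : realType} {d : measure_display} {T : measurableType d}.
Variable mu : {measure set T -> \bar R}.

Definition gam (beta : R) : R := 8^-1 - 2 * beta^+2.
Definition CC (beta : R) : R := 40 / (gam beta)^+2.

Lemma M_bound p q r lam : is_density mu p -> is_density mu q ->
  is_density mu r -> 0 <= lam -> lam <= 2^-1 ->
  \int[mu]_x (r x * expR (- (lam * test_summand p q x))) <=
  1 - lam * \int[mu]_x (r x * test_summand p q x)
    + 2 * lam^+2 * \int[mu]_x (r x * (test_summand p q x)^+2).
Proof.
move=> dp dq dr l0 l2.
have ie := @int_re _ _ _ mu p q r lam dp dq dr l0.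
have i1 := dens_int dr.
have i2 : mu.-integrable setT (EFin \o (fun x => r x * test_summand p q x)).
  apply: (@int_rg _ _ _ mu p q r id dp dq dr) => // y; by rewrite ler_norml.
have i3 : mu.-integrable setT (EFin \o (fun x => r x * (test_summand p q x)^+2)).
  apply: (@int_rg _ _ _ mu p q r (fun y => y^+2) dp dq dr).
    exact: measurable_funX.
  move=> y /andP[y1 y2]; rewrite ger0_norm ?sqr_ge0 //; nra.
have e : 1 - lam * \int[mu]_x (r x * test_summand p q x)
    + 2 * lam^+2 * \int[mu]_x (r x * (test_summand p q x)^+2) =
  \int[mu]_x (r x - lam * (r x * test_summand p q x)
     + 2 * lam^+2 * (r x * (test_summand p q x)^+2)).
  have i12 := int_sub i1 (int_scale lam i2).
  have i4 := int_scale (2 * lam^+2) i3.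
  have i5 := int_scale lam i2.
  by rewrite RintegralD // RintegralB // !RintegralZl // (dens_Rint dr).
rewrite e; apply: le_Rintegral => //.
  exact: int_add (int_sub i1 (int_scale lam i2)) (int_scale (2 * lam^+2) i3).
move=> x _.
have r0 := dens_ge0 dr x.
have fa := ts_abs _ _ x (dens_ge0 dp x) (dens_ge0 dq x).
move: fa; rewrite ler_norml => /andP[f1 f2].
have hx : - (lam * test_summand p q x) <= 2^-1 by nra.
have := exp_quad _ hx.
move: (test_summand p q x) (expR (- (lam * test_summand p q x))) => F E hE.
have -> : r x - lam * (r x * F) + 2 * lam^+2 * (r x * F^+2) =
  r x * (1 + - (lam * F) + 2 * (- (lam * F))^+2) by ring.
by rewrite ler_wpM2l.
Qed.

Lemma arith (beta g I J m v lam L n : R) :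
  0 <= beta -> beta < 4^-1 -> g = 8^-1 - 2 * beta^+2 -> lam = g / 20 ->
  0 < I -> J <= beta^+2 * I -> I / 8 - 2 * J <= m -> v <= 2 * J + 4 * I ->
  0 <= L -> 0 <= n -> 80 * L <= n * (g^+2 * I) ->
  n * (- (lam * m) + 2 * lam^+2 * v) <= - L.
Proof.
move=> b0 b4 eg el I0 hJ hm hv L0 n0 hn.
have b2 : beta^+2 < 16^-1 by nra.
have g0 : 0 < g by rewrite eg; lra.
have lam0 : 0 <= lam by rewrite el; lra.
have m1 : g * I <= m by rewrite eg; nra.
have v1 : v <= 5 * I by nra.
have t1 : lam * (g * I) <= lam * m by rewrite ler_wpM2l.
have t2 : lam^+2 * v <= lam^+2 * (5 * I) by rewrite ler_wpM2l // sqr_ge0.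
have t3 : - (lam * m) + 2 * lam^+2 * v <= - (g^+2 * I / 40).
  have : - (lam * (g * I)) + 2 * (lam^+2 * (5 * I)) = - (g^+2 * I / 40).
    by rewrite el; field.
  lra.
have t4 : n * (- (lam * m) + 2 * lam^+2 * v) <= n * (- (g^+2 * I / 40)).
  by rewrite ler_wpM2l.
lra.
Qed.

Lemma main_H0 p q r beta delta n :
  is_density mu p -> is_density mu q -> is_density mu r ->
  0 <= beta -> beta < 4^-1 -> 0 < II mu p q ->
  close_to mu beta (hellinger mu p q) p r -> 0 < delta < 1 ->
  CC beta * ln delta^-1 / (hellinger mu p q)^+2 <= n%:R ->
  ((1 - delta)%:E <= iid_expect mu r n (fun xs => (out_H0 p q xs)%:E))%E.
Proof.
move=> dp dq dr b0 b4 Ipos cl /andP[d0 d1] hn.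
have hI := close_II mu _ _ _ _ b0 (hell_ge0 mu p q) dp dr cl.
rewrite hell_sq in hI hn.
set g := gam beta.
have b2 : beta^+2 < 16^-1 by nra.
have g0 : 0 < g by rewrite /g /gam; lra.
set lam := g / 20.
have l0 : 0 <= lam by rewrite /lam; lra.
have l2 : lam <= 2^-1 by have := sqr_ge0 beta; rewrite /lam /g /gam; lra.
have Mb := M_bound _ _ _ _ dp dq dr l0 l2.
have mb := m_bound mu _ _ _ dp dq dr.
have vb := v_bound mu _ _ _ dp dq dr.
set M := \int[mu]_x (r x * expR (- (lam * test_summand p q x))).
have M0 : 0 <= M.
  by apply: Rintegral_ge0 => x _; rewrite mulr_ge0 ?expR_ge0 //; exact: (dens_ge0 dr).
set L := ln delta^-1.
have L0 : 0 <= L by rewrite /L ln_ge0 // invf_ge1 // ltW.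
have hn' : 80 * L <= n%:R * (g^+2 * II mu p q).
  have I2 : 0 < II mu p q / 2 by lra.
  move: hn; rewrite ler_pdivrMr // /CC -/g => hn.
  have : 40 / g^+2 * L * g^+2 <= n%:R * (II mu p q / 2) * g^+2.
    by rewrite ler_wpM2r // sqr_ge0.
  have -> : 40 / g^+2 * L * g^+2 = 40 * L by field; rewrite gt_eqF.
  lra.
have key := @arith beta g (II mu p q) (II mu p r) _ _ lam L n%:R b0 b4 erefl erefl Ipos
  ltac:(lra) mb vb L0 (ler0n _ _) hn'.
set z := - (lam * \int[mu]_x (r x * test_summand p q x)) +
          2 * lam ^+ 2 * \int[mu]_x (r x * test_summand p q x ^+ 2).
have Mz : M <= expR z.
  apply: (le_trans Mb); apply: le_trans (expR_ge1Dx z); rewrite /z; clearbody M lam g; lra.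
have Mn : M ^+ n <= delta.
  apply: (@le_trans _ _ (expR z ^+ n)).
    by apply: lerXn2r; rewrite ?nnegrE ?expR_ge0.
  rewrite -expRM_natl.
  have -> : delta = expR (- L) by rewrite /L expRN lnK ?invrK // posrE invr_gt0.
  by rewrite ler_expR.
have ch := chern mu _ _ _ _ n 0 dp dq dr l0.
rewrite mulr0 oppr0 expR0 mul1r -/M in ch.
have eh : hh mu r (test_summand p q) n 0 =
    iid_expect mu r n (fun xs => (out_H0 p q xs)%:E).
  rewrite /hh; congr (iid_expect _ _ _ _); apply: funext => xs.
  by rewrite add0r out_H0_eq.
rewrite -eh; apply: le_trans ch; rewrite lee_fin; lra.
Qed.

End mainH0.

Section pos.
Context {R : realType} {d : measure_display} {T : measurableType d}.
Variable mu : {measure set T -> \bar R}.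

Lemma II_pos p q : is_density mu p -> is_density mu q -> distr_neq mu p q ->
  0 < II mu p q.
Proof.
move=> dp dq [B [mB hB]].
rewrite lt_neqAle II_ge0 andbT eq_sym; apply/negP => /eqP I0.
apply: hB.
have iA := int_sqdiff dp dq.
have mA : measurable_fun setT (fun x => (Num.sqrt (p x) - Num.sqrt (q x))^+2).
  apply: measurable_funX; apply: measurable_funB; apply: meas_sqrt.
    exact: (dens_meas dp).
  exact: (dens_meas dq).
have e0 : (\int[mu]_x `|((Num.sqrt (p x) - Num.sqrt (q x))^+2)%:E| = 0)%E.
  under eq_integral do rewrite gee0_abs ?lee_fin ?sqr_ge0 //.
  by rewrite int_EFin // -/(II mu p q) I0.
have := (ae_eq_integral_abs mu measurableT (f := EFin \o (fun x => (Num.sqrt (p x) - Num.sqrt (q x))^+2))) .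
move=> /(_ ((measurable_EFinP _ _).2 mA)) /iffLR /(_ e0) Hae.
apply: ae_eq_integral => //.
- apply: (measurable_funS measurableT) => //; apply/measurable_EFinP.
  first [exact: (dens_meas dp) | exact: (dens_meas dq)].
- apply: (measurable_funS measurableT) => //; apply/measurable_EFinP.
  first [exact: (dens_meas dp) | exact: (dens_meas dq)].
move: Hae; apply: filterS => x /= H Bx.
have := H I; rewrite /= => /eqP; rewrite eqe sqrf_eq0 subr_eq0 => /eqP e.
have := sqr_sqrtr (dens_ge0 dp x); have := sqr_sqrtr (dens_ge0 dq x).
by rewrite e => -> ->.
Qed.

End pos.

Lemma beta_bound (R : realType) (beta : R) :
  beta < (Num.sqrt 2 - 1) / (2 * Num.sqrt 2 - 1) -> beta < 4^-1.
Proof.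
move=> hb; apply: (lt_le_trans hb).
have s2 : Num.sqrt 2 ^+ 2 = 2 :> R by rewrite sqr_sqrtr.
have s0 : 0 <= Num.sqrt 2 :> R by exact: sqrtr_ge0.
move: s2 s0; move: (Num.sqrt 2) => s s2 s0.
have s1 : 1 < s by nra.
have sp : 0 < 2 * s - 1 by lra.
rewrite ler_pdivrMr //; nra.
Qed.

Theorem corollary2 (R : realType) (beta : R) :
  0 <= beta -> beta < (Num.sqrt 2 - 1) / (2 * Num.sqrt 2 - 1) ->
  exists C : R,
  forall (d : measure_display) (T : measurableType d)
         (mu : {measure set T -> \bar R}),
  sigma_finite setT mu ->
  forall P Q : T -> R, is_density mu P -> is_density mu Q -> distr_neq mu P Q ->
  forall delta : R, 0 < delta < 1 ->
  forall n : nat, C * ln delta^-1 / (hellinger mu P Q) ^+ 2 <= n%:R ->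
  forall Rd : T -> R, is_density mu Rd ->
    (close_to mu beta (hellinger mu P Q) P Rd ->
       ((1 - delta)%:E <= iid_expect mu Rd n (fun xs => (out_H0 P Q xs)%:E))%E) /\
    (close_to mu beta (hellinger mu P Q) Q Rd ->
       ((1 - delta)%:E <= iid_expect mu Rd n (fun xs => (out_H1 P Q xs)%:E))%E).
Proof.
move=> b0 bb; have b4 := beta_bound _ _ bb.
exists (CC beta) => d T mu _ P Q dP dQ hneq delta hd n hn Rd dR; split => cl.
  apply: (@main_H0 _ _ _ mu P Q Rd beta delta n) => //; exact: (II_pos mu P Q).
have -> : (fun xs => (out_H1 P Q xs)%:E) = (fun xs => (out_H0 Q P xs)%:E).
  by apply: funext => xs; rewrite out_H1_eq.
rewrite hell_sym in cl hn.
apply: (@main_H0 _ _ _ mu Q P Rd beta delta n) => //; apply: (II_pos mu Q P) => //.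
by case: hneq => A [mA h]; exists A; split => // e; apply: h.
Qed.
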